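(* Let $\mathcal C$ be a small strongly upper-triangular linear category. Then $\operatorname{HH}_0(\mathcal C)\cong\mathbb Z\operatorname{Ob}(\mathcal C)$, the free abelian group on $\operatorname{Ob}(\mathcal C)$, and $\operatorname{HH}_i(\mathcal C)=0$ for all $i>0$.
   Context: A small linear category $\mathcal C$ is upper-triangular if there is a partial order $\le$ on $\operatorname{Ob}(\mathcal C)$ such that $\mathcal C(x,y)\neq0$ implies $x\le y$; it is strongly upper-triangular if moreover $\mathcal C(x,x)\cong\mathbb Z$ (as rings) for every object $x$. $\operatorname{HH}_*(\mathcal C)$ denotes Hochschild–Mitchell homology: the homology of the complex $C_n=\bigoplus_{x_0,\dots,x_n}\mathcal C(x_n,x_0)\otimes\mathcal C(x_{n-1},x_n)\otimes\dots\otimes\mathcal C(x_0,x_1)$ with $d_n(f_n\otimes\dots\otimes f_0)=\sum_{i=0}^{n-1}(-1)^i f_n\otimes\dots\otimes f_{n-i}f_{n-i-1}\otimes\dots\otimes f_0+(-1)^n f_0f_n\otimes f_{n-1}\otimes\dots\otimes f_1$. *)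

(* Defs.v *)
From HB Require Import structures.
From Stdlib Require Import ClassicalEpsilon List.
From mathcomp Require Import all_boot all_order all_algebra.
Set Implicit Arguments. Unset Strict Implicit. Unset Printing Implicit Defensive.
Import GRing.Theory.
Local Open Scope ring_scope.

Record LinCat := {
  Ob : Type;
  Hom : Ob -> Ob -> zmodType;
  comp : forall x y z : Ob, Hom y z -> Hom x y -> Hom x z;
  idm : forall x : Ob, Hom x x;
  compA : forall w x y z (h : Hom y z) (g : Hom x y) (f : Hom w x),
      comp h (comp g f) = comp (comp h g) f;
  comp1m : forall x y (f : Hom x y), comp (idm y) f = f;
  compm1 : forall x y (f : Hom x y), comp f (idm x) = f;
  compDl : forall x y z (g g' : Hom y z) (f : Hom x y),
      comp (g + g') f = comp g f + comp g' f;
  compDr : forall x y z (g : Hom y z) (f f' : Hom x y),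
      comp g (f + f') = comp g f + comp g f'
}.
Arguments comp {_ x y z}.
Arguments idm {_}.
Arguments Hom {_}.

Definition upper_triangular (C : LinCat) : Prop :=
  exists le : Ob C -> Ob C -> Prop,
    (forall x, le x x) /\
    (forall x y, le x y -> le y x -> x = y) /\
    (forall x y z, le x y -> le y z -> le x z) /\
    (forall x y : Ob C, (exists f : Hom x y, f <> 0) -> le x y).

Definition strongly_upper_triangular (C : LinCat) : Prop :=
  upper_triangular C /\
  forall x : Ob C, exists phi : Hom x x -> int,
    bijective phi /\
    (forall f g, phi (f + g) = phi f + phi g) /\
    (forall f g, phi (comp f g) = phi f * phi g) /\
    phi (idm x) = 1.

Definition cdec (T : Type) (a b : T) : bool :=
  if excluded_middle_informative (a = b) then true else false.

Definition fsum (T : Type) := seq (int * T)%type.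

Definition coef (T : Type) (s : fsum T) (t : T) : int :=
  \sum_(p <- s) (if cdec p.2 t then p.1 else 0).

Definition fzero (T : Type) (s : fsum T) : Prop := forall t, coef s t = 0.

Definition fneg (T : Type) (s : fsum T) : fsum T := [seq (- p.1, p.2) | p <- s].

Section HM.
Variable C : LinCat.

Definition MorS := {x : Ob C & {y : Ob C & Hom x y}}.
Definition src (f : MorS) : Ob C := projT1 f.
Definition tgt (f : MorS) : Ob C := projT1 (projT2 f).
Definition mkMor (x y : Ob C) (f : Hom x y) : MorS := existT _ x (existT _ y f).

(* compS f g = f o g  (if tgt g = src f; never used otherwise) *)
Definition compS (f g : MorS) : MorS :=
  match f, g with
  | existT y (existT z f'), existT x (existT y' g') =>
    match excluded_middle_informative (y' = y) with
    | left e => mkMor (comp f' (eq_rect y' (fun w => (Hom x w : Type)) g' y e))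
    | right _ => mkMor (0 : Hom x z)
    end
  end.

(** A generator f_n (x) f_(n-1) (x) ... (x) f_0 of C_n is the list
    [:: f_n; f_(n-1); ...; f_0] with f_i : x_i -> x_(i+1), f_n : x_n -> x_0. *)
Fixpoint chainable (s : seq MorS) : Prop :=
  match s with
  | f :: ((g :: _) as t) => src f = tgt g /\ chainable t
  | _ => True
  end.
Definition cyclic (s : seq MorS) : Prop :=
  match s with f :: t => tgt f = src (last f t) | [::] => False end.
Definition wfgen (n : nat) (s : seq MorS) : Prop :=
  size s = n.+1 /\ chainable s /\ cyclic s.

(* Elements of the n-th Hochschild--Mitchell chain group: formal sums of
   generators, modulo multilinearity (see [cequiv]). *)
Definition IsChain (n : nat) (c : fsum (seq MorS)) : Prop :=
  List.Forall (fun p => wfgen n p.2) c.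

(** Multilinearity relations defining the tensor products. *)
Record MLRel := { ml_l : seq MorS; ml_r : seq MorS; ml_x : Ob C; ml_y : Ob C;
                  ml_a : Hom ml_x ml_y; ml_b : Hom ml_x ml_y }.
Definition expandR (rs : seq (int * MLRel)%type) : fsum (seq MorS) :=
  flatten [seq let: (c, r) := p in
     [:: (c, ml_l r ++ mkMor (ml_a r + ml_b r) :: ml_r r);
         (- c, ml_l r ++ mkMor (ml_a r) :: ml_r r);
         (- c, ml_l r ++ mkMor (ml_b r) :: ml_r r)] | p <- rs].
Definition inR (s : fsum (seq MorS)) : Prop :=
  exists rs : seq (int * MLRel)%type, forall g, coef s g = coef (expandR rs) g.
Definition cequiv (s t : fsum (seq MorS)) : Prop := inR (s ++ fneg t).

Fixpoint face (i : nat) (s : seq MorS) : seq MorS :=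
  match i, s with
  | 0, f :: g :: t => compS f g :: t
  | i'.+1, f :: t => f :: face i' t
  | _, _ => s
  end.
(* [:: f_n; ...; f_0] |-> [:: f_0 f_n; f_(n-1); ...; f_1] *)
Definition lastface (s : seq MorS) : seq MorS :=
  match s with
  | [::] => [::]
  | f :: t => match rev t with
              | [::] => [:: f]
              | g :: rt => compS g f :: rev rt
              end
  end.
Definition dgen (n : nat) (s : seq MorS) : fsum (seq MorS) :=
  [seq ((-1) ^+ i, face i s) | i <- iota 0 n] ++
  (if n is 0 then [::] else [:: ((-1) ^+ n, lastface s)]).
Definition dchain (n : nat) (c : fsum (seq MorS)) : fsum (seq MorS) :=
  flatten [seq [seq (p.1 * q.1, q.2) | q <- dgen n p.2] | p <- c].

Definition HH_vanishes (i : nat) : Prop :=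
  forall c, IsChain i c -> cequiv (dchain i c) [::] ->
    exists b, IsChain i.+1 b /\ cequiv (dchain i.+1 b) c.

(** HH_0(C) = C_0 / im d_1 is isomorphic to the free abelian group on Ob C:
    there is a family e of 0-chains such that the induced homomorphism
    Z Ob(C) -> HH_0(C), x |-> [e x], is bijective. *)
Definition extend (e : Ob C -> fsum (seq MorS)) (s : fsum (Ob C)) :=
  flatten [seq [seq (p.1 * q.1, q.2) | q <- e p.2] | p <- s].
Definition HH0_free : Prop :=
  exists e : Ob C -> fsum (seq MorS),
    (forall x, IsChain 0 (e x)) /\
    (forall c, IsChain 0 c -> exists s : fsum (Ob C), exists b,
        IsChain 1 b /\ cequiv c (extend e s ++ dchain 1 b)) /\
    (forall s : fsum (Ob C),
        (exists b, IsChain 1 b /\ cequiv (extend e s) (dchain 1 b)) -> fzero s).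
End HM.

(* Main.v *)
Require Import Defs.
From Stdlib Require Import Eqdep ClassicalEpsilon Classical List.
From mathcomp Require Import all_boot all_order all_algebra.
From mathcomp Require Import ring.
Set Implicit Arguments. Unset Strict Implicit. Unset Printing Implicit Defensive.
Import GRing.Theory.
Local Open Scope ring_scope.

Lemma cdecP (T : Type) (a b : T) : reflect (a = b) (cdec a b).
Proof. rewrite /cdec; case: excluded_middle_informative => h; by constructor. Qed.

Definition Lf (T : Type) (F : T -> int) (s : fsum T) : int :=
  \sum_(p <- s) p.1 * F p.2.

Definition ind (T : Type) (g : T) (h : T) : int := if cdec h g then 1 else 0.

Lemma coefE (T : Type) (s : fsum T) g : coef s g = Lf (ind g) s.
Proof. rewrite /coef /Lf; apply: eq_bigr => p _; rewrite /ind; case: cdec; ring. Qed.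

Lemma Lf_nil T F : @Lf T F [::] = 0. Proof. by rewrite /Lf big_nil. Qed.
Lemma Lf_cons T F p s : @Lf T F (p :: s) = p.1 * F p.2 + Lf F s.
Proof. by rewrite /Lf big_cons. Qed.
Lemma Lf_cat T F s t : @Lf T F (s ++ t) = Lf F s + Lf F t.
Proof. by rewrite /Lf big_cat. Qed.
Lemma Lf_fneg T F s : @Lf T F (fneg s) = - Lf F s.
Proof. by rewrite /Lf /fneg big_map -sumrN; apply: eq_bigr => p _; rewrite mulNr. Qed.

Lemma Lf_coef0 T F (s : fsum T) : (forall g, coef s g = 0) -> Lf F s = 0.
Proof.
move: {2}(size s) (leqnn (size s)) => n; elim: n s => [|n IH] [|[a g] s] //=;
  try by rewrite Lf_nil.
move=> hs h0; rewrite Lf_cons /=.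
set P := fun p : int * T => cdec p.2 g.
have split : forall G : int * T -> int, \sum_(p <- s) G p =
   \sum_(p <- filter P s) G p + \sum_(p <- filter (predC P) s) G p.
  by move=> G; rewrite !big_filter (bigID P).
have h1 : \sum_(p <- filter P s) p.1 = - a.
  have := h0 g; rewrite /coef big_cons /= (split (fun p => if cdec p.2 g then p.1 else 0)).
  have -> : cdec g g by apply/cdecP.
  rewrite [X in _ + (_ + X)]big_filter [X in _ + (_ + X)]big_mkcond /=.
  rewrite [X in _ + (_ + X)]big1; last by move=> p _; rewrite /P /predC /=; case: cdec.
  rewrite addr0 big_filter [in X in _ -> X]big_filter.
  rewrite (eq_bigr (fun p => p.1)); last by move=> p; rewrite /P => ->.
  by move=> /eqP; rewrite addrC addr_eq0 => /eqP.
have h2 : Lf F (filter (predC P) s) = 0.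
  apply: IH; first by rewrite size_filter (leq_trans (count_size _ _)).
  move=> t; rewrite /coef big_filter.
  case: (cdecP g t) => [<-|ne].
    by rewrite big1 // => p; rewrite /P /predC /=; case: cdec.
  have := h0 t; rewrite /coef big_cons /=.
  have -> : cdec g t = false by apply/cdecP.
  rewrite add0r (split (fun p => if cdec p.2 t then p.1 else 0)).
  rewrite big_filter big1 ?add0r ?big_filter // => p; rewrite /P => /cdecP ->.
  by have -> : cdec g t = false by apply/cdecP.
rewrite /Lf (split (fun p => p.1 * F p.2)).
move: h2; rewrite /Lf => ->; rewrite addr0.
rewrite big_filter (eq_bigr (fun p => p.1 * F g)); last by move=> p /cdecP ->.
by rewrite -mulr_suml -big_filter h1; ring.
Qed.

Section Gen.
Variable C : LinCat.
Notation MS := (seq (MorS C)).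

Definition mlin (F : MS -> int) := forall l r (x y : Ob C) (a b : Defs.Hom x y),
  F (l ++ mkMor (a + b) :: r) = F (l ++ mkMor a :: r) + F (l ++ mkMor b :: r).

Lemma Lf_expandR F rs : mlin F -> Lf F (expandR rs) = 0.
Proof.
move=> hF; elim: rs => [|[c r] rs IH]; first by rewrite /expandR /= Lf_nil.
rewrite /expandR /= !Lf_cons -/(expandR rs) IH /= hF; ring.
Qed.

Lemma coef_cat T (s t : fsum T) g : coef (s ++ t) g = coef s g + coef t g.
Proof. by rewrite !coefE Lf_cat. Qed.
Lemma coef_fneg T (s : fsum T) g : coef (fneg s) g = - coef s g.
Proof. by rewrite !coefE Lf_fneg. Qed.

Lemma Lf_inR F s : mlin F -> inR s -> Lf F s = 0.
Proof.
move=> hF [rs hrs].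
have : Lf F (s ++ fneg (expandR rs)) = 0.
  by apply: Lf_coef0 => g; rewrite coef_cat coef_fneg hrs subrr.
by rewrite Lf_cat Lf_fneg Lf_expandR // subr0.
Qed.

Lemma Lf_ceq F s t : mlin F -> cequiv s t -> Lf F s = Lf F t.
Proof.
move=> hF h; have := Lf_inR hF h; rewrite Lf_cat Lf_fneg => /eqP.
by rewrite subr_eq0 => /eqP.
Qed.

Lemma inR_coef (s t : fsum MS) : (forall g, coef s g = coef t g) -> inR t -> inR s.
Proof. by move=> h [rs hrs]; exists rs => g; rewrite h. Qed.

Lemma inR0 (s : fsum MS) : (forall g, coef s g = 0) -> inR s.
Proof. by move=> h; exists [::] => g; rewrite h /expandR /= /coef big_nil. Qed.

Lemma expandR_cat (r1 r2 : seq (int * MLRel C)) : expandR (r1 ++ r2) = expandR r1 ++ expandR r2.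
Proof. by rewrite /expandR map_cat flatten_cat. Qed.

Lemma inR_cat (s t : fsum MS) : inR s -> inR t -> inR (s ++ t).
Proof.
move=> [r1 h1] [r2 h2]; exists (r1 ++ r2) => g.
by rewrite expandR_cat !coef_cat h1 h2.
Qed.

Lemma inR_neg (s : fsum MS) : inR s -> inR (fneg s).
Proof.
move=> [rs h]; exists [seq (- p.1, p.2) | p <- rs] => g.
rewrite coef_fneg h -coef_fneg; congr coef.
elim: rs {h} => [|[c r] rs IH] //=.
by rewrite /expandR /= -/(expandR rs) -/(expandR [seq (- p.1, p.2) | p <- rs]) -IH.
Qed.

Lemma coef_cons T (a : int) (x : T) s g :
  coef ((a, x) :: s) g = a * (if cdec x g then 1 else 0) + coef s g.
Proof. by rewrite /coef big_cons /=; case: cdec; rewrite ?mulr1 ?mulr0. Qed.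
Lemma coef_nil T (g : T) : coef [::] g = 0.
Proof. by rewrite /coef big_nil. Qed.

Ltac cs := repeat (rewrite ?coef_cat ?coef_fneg ?coef_cons ?coef_nil).

Lemma ceq_coef (s t : fsum MS) : (forall g, coef s g = coef t g) -> cequiv s t.
Proof. by move=> h; apply: inR0 => g; rewrite coef_cat coef_fneg h subrr. Qed.

Lemma ceq_refl (s : fsum MS) : cequiv s s.
Proof. exact: ceq_coef. Qed.

Lemma ceq_sym (s t : fsum MS) : cequiv s t -> cequiv t s.
Proof.
move=> h; apply: inR_coef (inR_neg h) => g.
by cs; ring.
Qed.

Lemma ceq_trans (s t u : fsum MS) : cequiv s t -> cequiv t u -> cequiv s u.
Proof.
move=> h1 h2; apply: inR_coef (inR_cat h1 h2) => g.
by cs; ring.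
Qed.

Lemma ceq_cat (s s' t t' : fsum MS) :
  cequiv s s' -> cequiv t t' -> cequiv (s ++ t) (s' ++ t').
Proof.
move=> h1 h2; apply: inR_coef (inR_cat h1 h2) => g.
by cs; ring.
Qed.

Lemma ceq_lin (s t s' t' : fsum MS) : cequiv s t ->
  (forall g, coef s' g - coef t' g = coef s g - coef t g) ->
  cequiv s' t'.
Proof.
move=> h hc; apply: inR_coef h => g.
by cs; rewrite hc.
Qed.

Lemma ceq_lin_neg (s t s' t' : fsum MS) : cequiv s t ->
  (forall g, coef s' g - coef t' g = coef t g - coef s g) ->
  cequiv s' t'.
Proof. move=> /ceq_sym; exact: ceq_lin. Qed.

Lemma ceq_ml c l r (x y : Ob C) (a b : Defs.Hom x y) :
  cequiv [:: (c, l ++ mkMor (a + b) :: r)]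
         [:: (c, l ++ mkMor a :: r); (c, l ++ mkMor b :: r)].
Proof.
exists [:: (c, Build_MLRel l r a b)] => g.
rewrite /expandR /=; cs; ring.
Qed.

End Gen.

Section Cat.
Variable C : LinCat.
Notation MS := (seq (MorS C)).
Notation HomC := (@Defs.Hom C).

Definition idS (x : Ob C) : MorS C := mkMor (idm x).
Definition iszero (f : MorS C) : Prop :=
  match f with existT _ (existT _ h) => h = 0 end.

Lemma dbl0 (V : zmodType) (a : V) : a = a + a -> a = 0.
Proof. by move=> h; rewrite -(addrK a a) -h subrr. Qed.

Lemma comp0l x y z (f : HomC x y) : Defs.comp (0 : HomC y z) f = 0.
Proof.
by apply: dbl0; rewrite -compDl addr0.
Qed.
Lemma comp0r x y z (g : HomC y z) : Defs.comp g (0 : HomC x y) = 0.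
Proof.
by apply: dbl0; rewrite -compDr addr0.
Qed.

Lemma compS_mk x y z (f : HomC y z) (g : HomC x y) :
  compS (mkMor f) (mkMor g) = mkMor (Defs.comp f g).
Proof.
rewrite /compS /mkMor /=; case: excluded_middle_informative => [e|//].
by rewrite (UIP_refl _ _ e).
Qed.

Lemma compS_zero f g : iszero f \/ iszero g -> iszero (compS f g).
Proof.
case: f => y [z f]; case: g => x [y' g] /=.
case: excluded_middle_informative => [e|] //= h; subst y'; case: h => -> /=;
  [exact: comp0l | exact: comp0r].
Qed.

Definition gval (y : Ob C) (phi : HomC y y -> int) (f : MorS C) : int :=
  let: existT a (existT b h) := f in
  match excluded_middle_informative (a = y) with
  | left e1 => match excluded_middle_informative (b = y) with
     | left e2 => phi (eq_rect b (fun w => (HomC y w : Type))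
                     (eq_rect a (fun w => (HomC w b : Type)) h y e1) y e2)
     | right _ => 0 end
  | right _ => 0 end.

Lemma gval_mk y (phi : HomC y y -> int) (h : HomC y y) : gval phi (mkMor h) = phi h.
Proof.
rewrite /gval /mkMor; destruct (excluded_middle_informative (y = y)) as [e1|n]; last by case: n.
by rewrite (UIP_refl _ _ e1).
Qed.

Lemma gval_ne y (phi : HomC y y -> int) x z (h : HomC x z) : ~ (x = y /\ z = y) -> gval phi (mkMor h) = 0.
Proof.
move=> hn; rewrite /gval /mkMor; destruct (excluded_middle_informative (x = y)) as [e1|n] => //.
by destruct (excluded_middle_informative (z = y)) as [e2|n] => //; case: hn.
Qed.

Variables (y : Ob C) (phi : HomC y y -> int).
Hypothesis phiD : forall f g, phi (f + g) = phi f + phi g.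
Hypothesis phiM : forall f g, phi (Defs.comp f g) = phi f * phi g.
Hypothesis phi1 : phi (idm y) = 1.

Lemma phi0 : phi 0 = 0.
Proof. by apply: dbl0; rewrite -phiD addr0. Qed.

Lemma gval_add x z (a b : HomC x z) :
  gval phi (mkMor (a + b)) = gval phi (mkMor a) + gval phi (mkMor b).
Proof.
case: (classic (x = y /\ z = y)) => [[e1 e2]|hn]; last by rewrite !gval_ne.
subst; by rewrite !gval_mk.
Qed.

Lemma gval_zero f : iszero f -> gval phi f = 0.
Proof.
case: f => x [z h] hz; change (gval phi (mkMor h) = 0); rewrite /= in hz; rewrite hz.
case: (classic (x = y /\ z = y)) => [[e1 e2]|hn]; last by rewrite !gval_ne.
by subst; rewrite gval_mk phi0.
Qed.

Lemma gval_comp x (a b : HomC x x) :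
  gval phi (mkMor (Defs.comp a b)) = gval phi (mkMor a) * gval phi (mkMor b).
Proof.
case: (classic (x = y)) => [e|hn]; last by rewrite !gval_ne // => -[].
by subst; rewrite !gval_mk.
Qed.

End Cat.

Section Fun.
Variable C : LinCat.
Notation MS := (seq (MorS C)).
Notation HomC := (@Defs.Hom C).

Lemma In_cat (T : Type) (e : T) (s t : seq T) : In e (s ++ t) <-> In e s \/ In e t.
Proof.
elim: s => [|a s IH] /=; first by split=> [|[[]|]]; [right|].
by rewrite IH; tauto.
Qed.

Lemma In_rev (T : Type) (e : T) (s : seq T) : In e (rev s) <-> In e s.
Proof.
elim: s => [|a s IH] //=; rewrite rev_cons -cats1 In_cat IH /=; tauto.
Qed.

Definition endos (y : Ob C) (s : MS) := forall f, In f s -> src f = y /\ tgt f = y.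
Definition haszero (s : MS) := exists e, In e s /\ iszero e.

Lemma compS_endo (y : Ob C) (f g : MorS C) : src f = y /\ tgt f = y -> src g = y /\ tgt g = y ->
  src (compS f g) = y /\ tgt (compS f g) = y.
Proof.
case: f => a [b f]; case: g => c [d g] => -[e1 e2] [e3 e4]; rewrite /src /tgt /= in e1 e2 e3 e4; subst.
by have := compS_mk f g; rewrite /mkMor => ->.
Qed.

Variables (y : Ob C) (phi : HomC y y -> int).
Hypothesis phiD : forall f g, phi (f + g) = phi f + phi g.
Hypothesis phiM : forall f g, phi (Defs.comp f g) = phi f * phi g.
Hypothesis phi1 : phi (idm y) = 1.

Definition Fy (s : MS) : int := \prod_(f <- s) gval phi f.

Lemma Fy_cons f s : Fy (f :: s) = gval phi f * Fy s.
Proof. by rewrite /Fy big_cons. Qed.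
Lemma Fy_nil : Fy [::] = 1.
Proof. by rewrite /Fy big_nil. Qed.
Lemma Fy_cat s t : Fy (s ++ t) = Fy s * Fy t.
Proof. by rewrite /Fy big_cat. Qed.
Lemma Fy_rev s : Fy (rev s) = Fy s.
Proof. by rewrite /Fy big_rev. Qed.

Lemma Fy_mlin : mlin Fy.
Proof.
move=> l r x z a b; rewrite !Fy_cat !Fy_cons (gval_add phiD); ring.
Qed.

Lemma Fy_zero s e : In e s -> iszero e -> Fy s = 0.
Proof.
elim: s => [|a s IH] //= [<-|he] hz; rewrite Fy_cons.
  by rewrite (gval_zero phiD hz) mul0r.
by rewrite (IH he hz) mulr0.
Qed.

Lemma gval_compS_endo (y' : Ob C) (f g : MorS C) : src f = y' /\ tgt f = y' -> src g = y' /\ tgt g = y' ->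
  gval phi (compS f g) = gval phi f * gval phi g.
Proof.
case: f => a [b f]; case: g => c [d g] => -[e1 e2] [e3 e4]; rewrite /src /tgt /= in e1 e2 e3 e4; subst.
have := compS_mk f g; rewrite /mkMor => ->.
exact: (gval_comp phiM).
Qed.

Lemma gval_compS_zero f g : iszero f \/ iszero g -> gval phi (compS f g) = 0.
Proof. by move=> h; apply: (gval_zero phiD); apply: compS_zero. Qed.

Definition Pgood (s : MS) := haszero s \/ exists y', endos y' s.

Lemma face_F k (s : MS) : (k.+1 < size s)%N -> Pgood s -> Fy (face k s) = Fy s.
Proof.
elim: k s => [|k IH] [|f [|g t]] //= hsz hP; rewrite !Fy_cons.
- case: hP => [[e [he hz]]|[y' hy]].
  + case: he => [ef|[eg|et]]; subst.
    * by rewrite (gval_zero phiD hz) gval_compS_zero ?mul0r; auto.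
    * by rewrite (gval_zero phiD hz) gval_compS_zero ?mul0r ?mulr0; auto.
    * by rewrite (Fy_zero et hz) !mulr0.
  + rewrite (@gval_compS_endo y') ?mulrA //; apply: hy => /=; auto.
- case: hP => [[e [he hz]]|[y' hy]].
  + case: he => [ef|he].
    * by subst; rewrite (gval_zero phiD hz) !mul0r.
    * by rewrite -[gval phi g * _]Fy_cons IH //; left; exists e.
  + rewrite -[gval phi g * _]Fy_cons IH //.
    by right; exists y' => h hh; apply: hy; right.
Qed.

Lemma lastface_F s : Pgood s -> Fy (lastface s) = Fy s.
Proof.
case: s => [|f t] //=; case E: (rev t) => [|g rt] hP.
  by have -> : t = [::] by rewrite -(revK t) E.
have ht : t = rev (g :: rt) by rewrite -E revK.
have Ht : forall e, In e t <-> In e (g :: rt) by move=> e; rewrite -In_rev E.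
rewrite !Fy_cons Fy_rev ht Fy_rev Fy_cons.
case: hP => [[e [he hz]]|[y' hy]].
- case: he => [ef|/Ht [eg|et]]; subst.
  + by rewrite (gval_zero phiD hz) gval_compS_zero ?mul0r; auto.
  + by rewrite (gval_zero phiD hz) gval_compS_zero ?mul0r ?mulr0; auto.
  + by rewrite (Fy_zero et hz) !mulr0.
- rewrite (@gval_compS_endo y'); first ring.
    by apply: hy; right; apply/Ht; left.
  by apply: hy; left.
Qed.

Definition alt (n : nat) : int := \sum_(k <- iota 0 n) (-1) ^+ k.
Definition kappa (n : nat) : int := alt n + (if n is 0 then 0 else (-1) ^+ n).

Lemma Lf_dgen n s : wfgen n s -> Pgood s -> Lf Fy (dgen n s) = kappa n * Fy s.
Proof.
move=> [hsz _] hP; rewrite /dgen Lf_cat /Lf big_map /kappa mulrDl.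
congr (_ + _).
  rewrite /alt mulr_suml; apply: eq_big_seq => k; rewrite mem_iota add0n => /andP [_ hk] /=.
  by rewrite face_F // hsz.
case: n hsz => [|n] hsz; first by rewrite big_nil mul0r.
by rewrite big_cons big_nil /= lastface_F // addr0.
Qed.

Lemma Fy_nseq k : Fy (nseq k.+1 (idS y)) = 1.
Proof.
elim: k => [|k IH]; first by rewrite Fy_cons Fy_nil /idS gval_mk phi1 mulr1.
by rewrite Fy_cons IH /idS gval_mk phi1 mulr1.
Qed.

Lemma Fy_nseq_ne x k : x <> y -> Fy (nseq k.+1 (idS x)) = 0.
Proof.
by move=> ne; rewrite Fy_cons /idS gval_ne ?mul0r // => -[].
Qed.

End Fun.

Lemma alt_val n : alt n = if odd n then 1 else 0.
Proof.
elim: n => [|n IH]; first by rewrite /alt big_nil.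
rewrite /alt -addn1 iotaD big_cat /= -/(alt n) IH add0n big_cons big_nil addr0.
rewrite -signr_odd !addn1 /=; by case: (odd n).
Qed.

Lemma kappa_val n : kappa n.+1 = if odd n then 1 else 0.
Proof.
rewrite /kappa alt_val -signr_odd /=; by case: (odd n).
Qed.

Ltac cs := repeat (rewrite ?coef_cat ?coef_fneg ?coef_cons ?coef_nil).
Section Tri.
Variable C : LinCat.
Notation MS := (seq (MorS C)).
Notation HomC := (@Defs.Hom C).
Hypothesis hC : strongly_upper_triangular C.

Lemma chain_le (le : Ob C -> Ob C -> Prop) :
  (forall x, le x x) -> (forall x y z, le x y -> le y z -> le x z) ->
  forall (h : MorS C) t, chainable (h :: t) ->
  (forall f, In f (h :: t) -> le (src f) (tgt f)) ->
  forall f, In f (h :: t) -> le (src (last h t)) (src f) /\ le (tgt f) (tgt h).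
Proof.
move=> lr lt h t; elim: t h => [|g t IH] h /=.
  by move=> _ _ f [<-|[]]; split; apply: lr.
move=> [e hch] hnz f hf.
have IHg := IH g hch (fun f hf => hnz f (or_intror hf)).
case: hf => [ef|hf].
  subst f; split; last exact: lr.
  apply: lt (proj1 (IHg g (or_introl erefl))) _.
  by rewrite e; apply: hnz; right; left.
have [h1 h2] := IHg f hf; split => //.
apply: lt h2 _; rewrite -e; apply: hnz; by left.
Qed.

Lemma dichot n (s : MS) : wfgen n s -> Pgood s.
Proof.
move=> [hsz [hch hcyc]].
case: (classic (haszero s)) => [hz|hnz]; [by left|right].
have [le [lr [la [lt lh]]]] := hC.1.
have nz : forall f, In f s -> le (src f) (tgt f).
  move=> [a [b h]] hf; apply: lh; exists h => h0; apply: hnz.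
  by exists (existT _ a (existT _ b h)); split.
case: s hsz hch hcyc nz hnz => [//|h t] _ hch hcyc nz _.
exists (tgt h) => f hf.
have [h1 h2] := chain_le lr lt hch nz hf.
rewrite /cyclic in hcyc; rewrite -hcyc in h1.
have h3 := nz f hf.
split.
  apply: la; last exact: h1.
  exact: lt h3 h2.
apply: la; first exact: h2.
exact: lt h1 h3.
Qed.

Lemma ceq_zero_entry c (l r : MS) x z :
  cequiv [:: (c, l ++ mkMor (0 : HomC x z) :: r)] [::].
Proof.
have h := ceq_ml c l r (0 : HomC x z) 0; rewrite addr0 in h.
apply: (ceq_lin_neg h) => g; cs; ring.
Qed.

Lemma ceq_neg_entry c (l r : MS) x z (a : HomC x z) :
  cequiv [:: (c, l ++ mkMor (- a) :: r)] [:: (- c, l ++ mkMor a :: r)].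
Proof.
have h := ceq_ml c l r a (- a); rewrite subrr in h.
have h2 := ceq_trans (ceq_sym h) (ceq_zero_entry c l r x z).
apply: (ceq_lin h2) => g; cs; ring.
Qed.

Lemma ceq_nat_entry c (l r : MS) x z (a : HomC x z) k :
  cequiv [:: (c, l ++ mkMor (a *+ k) :: r)] [:: (c * k%:Z, l ++ mkMor a :: r)].
Proof.
elim: k c => [|k IH] c.
  rewrite mulr0n; apply: (ceq_lin (ceq_zero_entry c l r x z)) => g; cs; ring.
rewrite mulrS.
have h := ceq_ml c l r a (a *+ k).
have h2 := ceq_trans h (ceq_cat (ceq_refl [:: (c, l ++ mkMor a :: r)]) (IH c)).
apply: (ceq_lin h2) => g; cs; rewrite -addn1 PoszD; ring.
Qed.

Lemma ceq_int_entry c (l r : MS) x z (a : HomC x z) (n : int) :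
  cequiv [:: (c, l ++ mkMor (a *~ n) :: r)] [:: (c * n, l ++ mkMor a :: r)].
Proof.
case: n => k; first exact: ceq_nat_entry.
have h := ceq_trans (ceq_neg_entry c l r (a *+ k.+1)) (ceq_nat_entry (- c) l r a k.+1).
apply: (ceq_lin h) => g; cs; rewrite NegzE; ring.
Qed.

Section Endo.
Variables (y : Ob C) (phi : HomC y y -> int).
Hypothesis phib : bijective phi.
Hypothesis phiD : forall f g, phi (f + g) = phi f + phi g.
Hypothesis phiM : forall f g, phi (Defs.comp f g) = phi f * phi g.
Hypothesis phi1 : phi (idm y) = 1.

Lemma phi_mulz (a : HomC y y) n : phi (a *~ n) = phi a * n.
Proof.
have hnat : forall k, phi (a *+ k) = phi a * k%:Z.
  elim=> [|k IH]; first by rewrite mulr0n (phi0 phiD) mulr0.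
  by rewrite mulrS phiD IH -addn1 PoszD; ring.
case: n => k; first exact: hnat.
have hN : forall b, phi (- b) = - phi b.
  move=> b; apply/eqP; rewrite -subr_eq0 opprK -phiD addNr (phi0 phiD) //.
by rewrite NegzE /= hN hnat; ring.
Qed.

Lemma hom_decomp (h : HomC y y) : h = idm y *~ phi h.
Proof.
apply: (bij_inj phib); by rewrite phi_mulz phi1 mul1r.
Qed.

Lemma endo_nf (m : MS) : forall (l r : MS) c, endos y m ->
  cequiv [:: (c, l ++ m ++ r)]
         [:: (c * Fy phi m, l ++ nseq (size m) (idS y) ++ r)].
Proof.
elim: m => [|f m IH] l r c hm.
  by apply: ceq_coef => g; rewrite Fy_nil mulr1.
have [e1 e2] := hm f (or_introl erefl).
case: f e1 e2 hm => a [b h] e1 e2 hm; rewrite /src /tgt /= in e1 e2; subst a b.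
have hm' : endos y m by move=> f hf; apply: hm; right.
have st := ceq_int_entry c l (m ++ r) (idm y) (phi h).
rewrite -hom_decomp in st.
have IH' := IH (rcons l (idS y)) r (c * phi h) hm'.
rewrite !cat_rcons in IH'.
apply: ceq_trans st (ceq_trans IH' _).
apply: ceq_coef => g.
change (existT _ y (existT _ y h)) with (mkMor h).
by rewrite Fy_cons gval_mk mulrA.
Qed.
End Endo.

Definition nfl n (d : seq (int * Ob C)) : fsum MS :=
  [seq (p.1, nseq n.+1 (idS p.2)) | p <- d].

Lemma split_In (T : Type) (e : T) (s : seq T) : In e s -> exists l r, s = l ++ e :: r.
Proof.
elim: s => [|a s IH] //= [<-|he]; first by exists [::], s.
by have [l [r ->]] := IH he; exists (a :: l), r.
Qed.

Lemma gen_nf n c (s : MS) : wfgen n s -> exists d, cequiv [:: (c, s)] (nfl n d).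
Proof.
move=> hw; case: (dichot hw) => [[e [he hz]]|[y hy]].
  have [l [r ->]] := split_In he.
  exists [::]; case: e hz {he} => a [b h] /= ->.
  exact: ceq_zero_entry.
have [phi [phib [phiD [phiM phi1]]]] := hC.2 y.
exists [:: (c * Fy phi s, y)].
have := endo_nf phib phiD phi1 [::] [::] c hy.
by rewrite !cats0 /= hw.1.
Qed.

Lemma chain_nf n (c : fsum MS) : IsChain n c -> exists d, cequiv c (nfl n d).
Proof.
elim: c => [|[a s] c IH] hc; first by exists [::]; apply: ceq_refl.
inversion hc as [|p q hp hq]; subst.
have [d1 h1] := gen_nf a hp.
have [d2 h2] := IH hq.
exists (d1 ++ d2); rewrite /nfl map_cat.
exact: (ceq_cat h1 h2).
Qed.

End Tri.

Section Main.
Variable C : LinCat.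
Notation MS := (seq (MorS C)).
Notation HomC := (@Defs.Hom C).

Lemma Lf_scale (T : Type) F a (s : fsum T) :
  Lf F [seq (a * q.1, q.2) | q <- s] = a * Lf F s.
Proof. by rewrite /Lf big_map mulr_sumr; apply: eq_bigr => q _ /=; rewrite mulrA. Qed.

Lemma Lf_dchain_cons F n p (c : fsum MS) :
  Lf F (dchain n (p :: c)) = p.1 * Lf F (dgen n p.2) + Lf F (dchain n c).
Proof. by rewrite /dchain /= Lf_cat Lf_scale. Qed.

Lemma Lf_dchain_nil F n : Lf F (dchain n ([::] : fsum MS)) = 0.
Proof. by rewrite /Lf /dchain /= big_nil. Qed.

Lemma Lf_dchain_wf (hC : strongly_upper_triangular C) y (phi : HomC y y -> int)
  (phiD : forall f g, phi (f + g) = phi f + phi g)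
  (phiM : forall f g, phi (Defs.comp f g) = phi f * phi g) n (c : fsum MS) :
  IsChain n c -> Lf (Fy phi) (dchain n c) = kappa n * Lf (Fy phi) c.
Proof.
elim: c => [|p c IH] hc; first by rewrite Lf_dchain_nil mulr0.
inversion hc as [|p' q hp hq]; subst.
rewrite Lf_dchain_cons IH // Lf_cons (Lf_dgen phiD phiM hp (dichot hC hp)); ring.
Qed.

Lemma compS_id (x : Ob C) : compS (idS x) (idS x) = idS x.
Proof. by rewrite /idS compS_mk comp1m. Qed.

Lemma face_nseq (e : MorS C) : compS e e = e ->
  forall k m, (k <= m)%N -> face k (nseq m.+2 e) = nseq m.+1 e.
Proof.
move=> he; elim=> [|k IH] m hk /=; first by rewrite he.
case: m hk => [//|m] hk /=; by rewrite IH.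
Qed.

Lemma lastface_nseq (e : MorS C) : compS e e = e ->
  forall m, lastface (nseq m.+2 e) = nseq m.+1 e.
Proof.
move=> he m; rewrite /lastface.
have -> : nseq m.+2 e = e :: nseq m.+1 e by [].
by rewrite rev_nseq /= rev_nseq he.
Qed.

Lemma Lf_dgen_nseq F (x : Ob C) m :
  Lf F (dgen m.+1 (nseq m.+2 (idS x))) = kappa m.+1 * F (nseq m.+1 (idS x)).
Proof.
rewrite /dgen Lf_cat /Lf big_map /kappa mulrDl; congr (_ + _).
  rewrite /alt mulr_suml; apply: eq_big_seq => k; rewrite mem_iota add0n => /andP [_ hk] /=.
  by rewrite face_nseq // compS_id.
by rewrite lastface_nseq ?compS_id //= big_cons big_nil addr0.
Qed.


Lemma Lf_nfl F n (d : seq (int * Ob C)) : Lf F (nfl n d) = \sum_(p <- d) p.1 * F (nseq n.+1 (idS p.2)).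
Proof. by rewrite /Lf /nfl big_map. Qed.

Lemma Lf_dchain_nfl F m (d : seq (int * Ob C)) :
  Lf F (dchain m.+1 (nfl m.+1 d)) = kappa m.+1 * Lf F (nfl m d).
Proof.
elim: d => [|p d IH]; first by rewrite Lf_dchain_nil mulr0.
have -> : nfl m.+1 (p :: d) = (p.1, nseq m.+2 (idS p.2)) :: nfl m.+1 d by [].
rewrite Lf_dchain_cons IH /= Lf_dgen_nseq.
rewrite Lf_cons /=; ring.
Qed.

Lemma chainable_nseq (x : Ob C) k : chainable (nseq k (idS x)).
Proof. by elim: k => [|[|k] IH] //=. Qed.

Lemma last_nseq (e : MorS C) k : last e (nseq k e) = e.
Proof. by elim: k. Qed.

Lemma wf_nseq (x : Ob C) n : wfgen n (nseq n.+1 (idS x)).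
Proof.
split; first by rewrite size_nseq.
split; first exact: chainable_nseq.
by rewrite /cyclic /= last_nseq.
Qed.

Lemma IsChain_nfl n (d : seq (int * Ob C)) : IsChain n (nfl n d).
Proof.
elim: d => [|p d IH]; first by constructor.
constructor => //; exact: wf_nseq.
Qed.

Lemma ind_nseq (x z : Ob C) n :
  ind (nseq n.+1 (idS z)) (nseq n.+1 (idS x)) = if cdec x z then 1 else 0.
Proof.
rewrite /ind; case: (cdecP x z) => [->|ne]; first by have -> : cdec (nseq n.+1 (idS z)) (nseq n.+1 (idS z)) by apply/cdecP.
case: cdecP => // heq; case: ne.
exact: (congr1 (fun s : MS => if s is f :: _ then src f else x) heq).
Qed.

End Main.

Theorem proposition4p2 (C : LinCat) (hC : strongly_upper_triangular C) :
  HH0_free C /\ (forall i : nat, (0 < i)%N -> HH_vanishes C i).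
Proof.
split.
- exists (fun x => [:: (1, [:: idS x])]); split; last split.
  + move=> x; constructor => //; exact: (wf_nseq x 0).
  + move=> c hc; have [d hd] := chain_nf hC hc.
    exists d, [::]; split; first by constructor.
    apply: (ceq_trans hd); apply: ceq_coef => g.
    rewrite /dchain /= cats0.
    elim: d {hd} => [|p d IH] /=; first by rewrite coef_nil.
    by rewrite coef_cons IH /extend /= coef_cons mulr1.
  + move=> s [b [hb heq]] t.
    have [phi [phib [phiD [phiM phi1]]]] := hC.2 t.
    have key : coef s t = Lf (Fy phi) (extend (fun x => [:: (1, [:: idS x])]) s).
      elim: s {heq} => [|p s IH] /=; first by rewrite coef_nil /extend /= Lf_nil.
      rewrite /coef big_cons -/(coef s t) IH /extend /= Lf_cons /= mulr1.
      congr (_ + _).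
      case: (cdecP p.2 t) => [->|ne].
        by have := Fy_nseq phi1 0; rewrite /= => ->; rewrite mulr1.
      by have := @Fy_nseq_ne _ _ phi _ 0 ne; rewrite /= => ->; rewrite mulr0.
    rewrite key (Lf_ceq (Fy_mlin phiD) heq).
    by rewrite (Lf_dchain_wf hC phiD phiM hb) (kappa_val 0) /= mul0r.
- move=> [//|m] _ c hc h0.
  have [d hd] := chain_nf hC hc.
  exists (nfl m.+2 d); split; first exact: IsChain_nfl.
  case ho: (odd m).
  + (* i = m.+1 even: c is equivalent to 0 *)
    apply: (ceq_trans _ (ceq_sym hd)); apply: ceq_coef => g.
    rewrite !coefE Lf_dchain_nfl (kappa_val m.+1) /= ho mul0r.
    case: (classic (exists x, g = nseq m.+2 (idS x))) => [[x ->]|hn].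
      have [phi [phib [phiD [phiM phi1]]]] := hC.2 x.
      have e1 : Lf (ind (nseq m.+2 (idS x))) (nfl m.+1 d) = Lf (Fy phi) (nfl m.+1 d).
        rewrite !Lf_nfl; apply: eq_bigr => p _; rewrite ind_nseq; congr (_ * _).
        case: (cdecP p.2 x) => [->|ne]; first by rewrite (Fy_nseq phi1).
        by rewrite (@Fy_nseq_ne _ _ phi _ _ ne).
      rewrite e1 -(Lf_ceq (Fy_mlin phiD) hd).
      have := Lf_ceq (Fy_mlin phiD) h0.
      by rewrite (Lf_dchain_wf hC phiD phiM hc) (kappa_val m) ho mul1r Lf_nil.
    rewrite Lf_nfl big1 // => p _; rewrite /ind; case: cdecP; last by rewrite mulr0.
    by move=> e; case: hn; exists p.2.
  +
    apply: (ceq_trans _ (ceq_sym hd)); apply: ceq_coef => g.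
    by rewrite !coefE Lf_dchain_nfl (kappa_val m.+1) /= ho mul1r.
Qed.
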